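(* Consider the multi-machine power system described in the context, and fix $\omega_0>0$ and $i_r^*\in\mathbb{R}^n_{>0}$, with zero-dynamics manifold $\Omega=\{x\in\mathcal{X}: i_r=i_r^*,\ \omega=\omega_0\mathbb{1}\}$. The unique control action $u=u^\star(x)=(u_m^\star(x),u_r^\star(x))$ which renders $\Omega$ invariant for the system is given by $$u_r^\star(x)=R_r i_r^*+(L_m\otimes \mathsf{e}_1^\top)\mathbf{R}_\theta^\top L_s^{-1}(-Z_s i_s+v),\qquad u_m^\star(x)=D\omega_0\mathbb{1}-I_r^*(L_m\otimes\mathsf{e}_2^\top)\mathbf{R}_\theta^\top i_s,$$ where $Z_s=R_s+\boldsymbol{j}\omega_0 L_s$ and $I_r^*=\mathrm{diag}(i_{r_i}^* )$.
   Context: Notation: $j=\begin{bsmallmatrix}0&-1\\1&0\end{bsmallmatrix}$, $I_2$ the $2\times2$ identity, $\mathsf{e}_1=(1,0)^\top$, $\mathsf{e}_2=(0,1)^\top$, $\mathbb{1}\in\mathbb{R}^n$ the all-ones vector, $\otimes$ the Kronecker product, $\boldsymbol{j}=I\otimes j$ (identity of the dimension dictated by context). For $\theta=(\theta_1,\dots,\theta_n)\in\mathbb{T}^n$, $R_{\theta_i}=\begin{bsmallmatrix}\cos\theta_i&-\sin\theta_i\\ \sin\theta_i&\cos\theta_i\end{bsmallmatrix}$ and $\mathbf{R}_\theta=\mathrm{blkdiag}(R_{\theta_1},\dots,R_{\theta_n})$. System: $n$ synchronous machines and $m$ transmission lines on a connected undirected graph with signed incidence matrix $E\in\mathbb{R}^{n\times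 m}$; $\mathbf{E}=E\otimes I_2$. Parameters (all scalar entries positive): $M=\mathrm{diag}(M_i)$, $D=\mathrm{diag}(D_i)$, $R_r=\mathrm{diag}(R_{r_i})$, $L_r=\mathrm{diag}(L_{r_i})$, $L_m=\mathrm{diag}(L_{m_i})$ in $\mathbb{R}^{n\times n}$; $R_s=\mathrm{diag}(R_{s_i})\otimes I_2$, $L_s=\mathrm{diag}(L_{s_i})\otimes I_2$, $C=\mathrm{diag}(C_i)\otimes I_2$, $G=\mathrm{diag}(G_i)\otimes I_2$ in $\mathbb{R}^{2n\times 2n}$; $L_{\mathsf t}=\mathrm{diag}(L_{\mathsf t_k})\otimes I_2$, $R_{\mathsf t}=\mathrm{diag}(R_{\mathsf t_k})\otimes I_2$ in $\mathbb{R}^{2m\times2m}$; and $L_{s_i}L_{r_i}-L_{m_i}^2>0$. State $x=(M\omega,\theta,\lambda_r,\lambda_s,Cv,L_{\mathsf t}i_{\mathsf t})\in\mathcal{X}=\mathbb{R}^n\times\mathbb{T}^n\times\mathbb{R}^n\times\mathbb{R}^{2n}\times\mathbb{R}^{2n}\times\mathbb{R}^{2m}$, input $u=(u_m,u_r)\in\mathbb{R}^n\times\mathbb{R}^n$. Stator currents $i_s\in\mathbb{R}^{2n}$ and rotor currents $i_r\in\mathbb{R}^n$ are defined from the fluxes by $\lambda_s=L_s i_s+\mathbf{R}_\theta(L_m\otimes\mathsf{e}_1)i_r$, $\lambda_r=L_r i_r+(L_m\otimes\mathsf{e}_1^\top)\mathbf{R}_\theta^\top i_s$; electrical torque $\tau_e=-I_r(L_m\otimes\mathsf{e}_2^\top)\mathbf{R}_\theta^\top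 i_s$ with $I_r=\mathrm{diag}(i_{r_i})$. Dynamics: $M\dot\omega=-D\omega-\tau_e+u_m$, $\dot\theta=\omega$, $\dot\lambda_r=-R_r i_r+u_r$, $\dot\lambda_s=-R_s i_s+v$, $C\dot v=-Gv-\mathbf{E}i_{\mathsf t}-i_s$, $L_{\mathsf t}\tfrac{d}{dt}i_{\mathsf t}=-R_{\mathsf t}i_{\mathsf t}+\mathbf{E}^\top v$. *)

(* Defs.v *)
From HB Require Import structures.
From mathcomp Require Import all_boot all_order all_algebra.
From mathcomp Require Import all_classical all_reals all_analysis.
Set Implicit Arguments.
Unset Strict Implicit.
Unset Printing Implicit Defensive.
Import Order.TTheory GRing.Theory Num.Theory.
Import numFieldNormedType.Exports.
Local Open Scope ring_scope.

Section PowerSystem.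
Variable R : realType.

Definition e1 : 'cV[R]_2 := \col_a (a == ord0)%:R.
Definition e2 : 'cV[R]_2 := \col_a (a == ord_max)%:R.

Definition jmx : 'M[R]_2 :=
  \matrix_(a, b) (if a == b then 0 else if a == ord0 then -1 else 1).

Definition rot (th : R) : 'M[R]_2 :=
  \matrix_(a, b) (if a == b then cos th else if a == ord0 then - sin th else sin th).

Definition sc (A : 'M[R]_1) : R := A ord0 ord0.

Definition signed_incidence (n m : nat) (E : 'M[R]_(n, m)) : Prop :=
  forall k : 'I_m, exists i j : 'I_n,
    [/\ i != j, E i k = 1, E j k = -1 & forall l, l != i -> l != j -> E l k = 0].

Definition adjacent (n m : nat) (E : 'M[R]_(n, m)) : rel 'I_n :=
  fun i j => (i != j) && [exists k, (E i k != 0) && (E j k != 0)].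

Definition connected_graph (n m : nat) (E : 'M[R]_(n, m)) : Prop :=
  forall i j : 'I_n, connect (adjacent E) i j.

(** Parameters of the n-machine, m-line system (block-diagonal parameters are
    given by their diagonal scalar entries). *)
Record params (n m : nat) := Params {
  pM : 'I_n -> R; pD : 'I_n -> R; pRr : 'I_n -> R; pLr : 'I_n -> R;
  pLm : 'I_n -> R; pRs : 'I_n -> R; pLs : 'I_n -> R; pC : 'I_n -> R;
  pG : 'I_n -> R; pLt : 'I_m -> R; pRt : 'I_m -> R; pE : 'M[R]_(n, m) }.

Definition admissible (n m : nat) (P : params n m) : Prop :=
  [/\ (forall i : 'I_n,
        [/\ 0 < pM P i, 0 < pD P i, 0 < pRr P i, 0 < pLr P i & 0 < pLm P i] /\
        [/\ 0 < pRs P i, 0 < pLs P i, 0 < pC P i & 0 < pG P i]),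
      (forall i : 'I_n, pLs P i * pLr P i - pLm P i ^+ 2 > 0),
      (forall k : 'I_m, 0 < pLt P k /\ 0 < pRt P k),
      signed_incidence (pE P) & connected_graph (pE P)].

(** Time signals: states (omega, theta, lambda_r, lambda_s, v, i_t), the
    stator/rotor currents determined by the fluxes, and the inputs.
    Two-dimensional quantities are stored per machine/line as 2-vectors
    (the Kronecker structure "_ (x) I_2"). Angles theta_i are real lifts. *)
Record traj (n m : nat) := Traj {
  om : 'I_n -> R -> R;
  th : 'I_n -> R -> R;
  lr : 'I_n -> R -> R;
  ls : 'I_n -> R -> 'cV[R]_2;
  vv : 'I_n -> R -> 'cV[R]_2;
  itl : 'I_m -> R -> 'cV[R]_2;
  isc : 'I_n -> R -> 'cV[R]_2;
  irc : 'I_n -> R -> R;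
  um : 'I_n -> R -> R;
  ur : 'I_n -> R -> R }.

Definition tau_e (n m : nat) (P : params n m) (X : traj n m) (i : 'I_n) (t : R) : R :=
  - (irc X i t * (pLm P i * sc (e2^T *m (rot (th X i t))^T *m isc X i t))).

Definition is_solution (n m : nat) (P : params n m) (X : traj n m) (a b : R) : Prop :=
  forall t, a < t < b ->
  (forall i, ls X i t = pLs P i *: isc X i t
               + (pLm P i * irc X i t) *: (rot (th X i t) *m e1)) /\
  (forall i, lr X i t = pLr P i * irc X i t
               + pLm P i * sc (e1^T *m (rot (th X i t))^T *m isc X i t)) /\
  (forall i, is_derive t 1 (fun s => pM P i * om X i s)
               (- (pD P i * om X i t) - tau_e P X i t + um X i t)) /\
  (forall i, is_derive t 1 (th X i) (om X i t)) /\
  (forall i, is_derive t 1 (lr X i) (- (pRr P i * irc X i t) + ur X i t)) /\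
  (forall i, is_derive t 1 (ls X i) (- (pRs P i *: isc X i t) + vv X i t)) /\
  (forall i, is_derive t 1 (fun s => pC P i *: vv X i s)
               (- (pG P i *: vv X i t) - \sum_(k < m) pE P i k *: itl X k t
                - isc X i t)) /\
  (forall k, is_derive t 1 (fun s => pLt P k *: itl X k s)
               (- (pRt P k *: itl X k t) + \sum_(i < n) pE P i k *: vv X i t)).

Definition in_Omega (n m : nat) (X : traj n m) (irs : 'I_n -> R) (w0 : R) (t : R) : Prop :=
  forall i, irc X i t = irs i /\ om X i t = w0.

(** u_r^*(x), i-th entry:
    R_r i_r^* + (L_m (x) e1^T) R_theta^T L_s^{-1} (- Z_s i_s + v),
    Z_s = R_s + j omega_0 L_s *)
Definition ur_star (n m : nat) (P : params n m) (irs : 'I_n -> R) (w0 : R)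
    (i : 'I_n) (theta : R) (is_ v : 'cV[R]_2) : R :=
  pRr P i * irs i
  + pLm P i * sc (e1^T *m (rot theta)^T *m
       ((pLs P i)^-1 *: (- (pRs P i *: is_ + (w0 * pLs P i) *: (jmx *m is_)) + v))).

Definition um_star (n m : nat) (P : params n m) (irs : 'I_n -> R) (w0 : R)
    (i : 'I_n) (theta : R) (is_ : 'cV[R]_2) : R :=
  pD P i * w0 - irs i * (pLm P i * sc (e2^T *m (rot theta)^T *m is_)).

End PowerSystem.

(* Main.v *)
Require Import Defs.
From HB Require Import structures.
From mathcomp Require Import all_boot all_order all_algebra.
From mathcomp Require Import all_classical all_reals all_analysis.
From mathcomp Require Import ring lra.
Import Order.TTheory GRing.Theory Num.Theory.
Import numFieldNormedType.Exports.
Local Open Scope ring_scope.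

Section H.
Variable R : realType.
Implicit Types (x : R) (v : 'cV[R]_2).
Notation i0 := (ord0 : 'I_2).
Notation i1 := (ord_max : 'I_2).

Lemma lift00 : lift ord0 ord0 = ord_max :> 'I_2.
Proof. exact/val_inj. Qed.

Lemma sc_e1 x v : sc ((@e1 R)^T *m (Defs.rot x)^T *m v) = cos x * v i0 ord0 + sin x * v i1 ord0.
Proof.
rewrite /sc !mxE !big_ord_recl !big_ord0 !mxE /=.
rewrite !big_ord_recl !big_ord0 !mxE /= lift00; ring.
Qed.

Lemma sc_e2 x v : sc ((@e2 R)^T *m (Defs.rot x)^T *m v) = - sin x * v i0 ord0 + cos x * v i1 ord0.
Proof.
rewrite /sc !mxE !big_ord_recl !big_ord0 !mxE /=.
rewrite !big_ord_recl !big_ord0 !mxE /= lift00; ring.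
Qed.

Lemma rote1_0 x : (Defs.rot x *m (@e1 R)) i0 ord0 = cos x.
Proof. rewrite !mxE !big_ord_recl !big_ord0 !mxE /= ?lift00; ring. Qed.
Lemma rote1_1 x : (Defs.rot x *m (@e1 R)) i1 ord0 = sin x.
Proof. rewrite !mxE !big_ord_recl !big_ord0 !mxE /= ?lift00; ring. Qed.
Lemma j_0 v : ((@jmx R) *m v) i0 ord0 = - v i1 ord0.
Proof. rewrite !mxE !big_ord_recl !big_ord0 !mxE /= ?lift00; ring. Qed.
Lemma j_1 v : ((@jmx R) *m v) i1 ord0 = v i0 ord0.
Proof. rewrite !mxE !big_ord_recl !big_ord0 !mxE /= ?lift00; ring. Qed.
Lemma is_derive_cmp (f : R -> 'cV[R]_2) (t : R) (df : 'cV[R]_2) (k : 'I_2) :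
  is_derive t 1 f df -> is_derive t 1 (fun s => f s k ord0) (df k ord0).
Proof.
move=> [d <-].
have dk : derivable (fun s => f s k ord0) t 1 by move/derivable_mxP: d.
by apply: DeriveDef => //; rewrite derive_mx // mxE.
Qed.

Lemma nincr_deriv (f df : R -> R) (a b : R) :
  (forall t, a < t < b -> is_derive t 1 f (df t)) ->
  (forall t, a < t < b -> df t <= 0) ->
  forall x y, a < x -> x <= y -> y < b -> f y <= f x.
Proof.
move=> hd hle x y ax xy yb.
have H := @ler0_derive1_le_oo R f a b.
apply: H => //.
- move=> s; rewrite in_itv /= => /hd [] //.
- move=> s; rewrite in_itv /= => hs; rewrite derive1E.
  have [_ ->] := hd s hs; exact: hle.
- move=> s; rewrite inE /= in_itv /= => hs; have [d _] := hd s hs.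
  exact/differentiable_continuous/derivable1_diffP.
- by rewrite in_itv /= yb (lt_le_trans ax xy).
- by rewrite in_itv /= ax (le_lt_trans xy yb).
Qed.

Lemma G_derive (th : R -> R) (l : R -> 'cV[R]_2) (t dth : R) (dl : 'cV[R]_2) :
  is_derive t 1 th dth -> is_derive t 1 l dl ->
  is_derive t 1 (fun s => cos (th s) * l s i0 ord0 + sin (th s) * l s i1 ord0)
    (dth * (- sin (th t) * l t i0 ord0 + cos (th t) * l t i1 ord0)
     + (cos (th t) * dl i0 ord0 + sin (th t) * dl i1 ord0)).
Proof.
move=> hth hl.
have h0 := @is_derive_cmp _ _ _ i0 hl.
have h1 := @is_derive_cmp _ _ _ i1 hl.
have hc : is_derive t 1 (cos \o th) (- sin (th t) * dth) by exact: is_derive1_comp.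
have hs : is_derive t 1 (sin \o th) (cos (th t) * dth) by exact: is_derive1_comp.
have := is_deriveD (is_deriveM hc h0) (is_deriveM hs h1).
move=> H.
have E : (fun s => cos (th s) * l s i0 ord0 + sin (th s) * l s i1 ord0) =
  ((cos \o th) * (fun s => l s i0 ord0) + (sin \o th) * (fun s => l s i1 ord0)) by [].
rewrite E; apply: is_derive_eq.
rewrite /= -![_ *: _]/(_ * _); ring.
Qed.
Lemma deriv_zero_near (f : R -> R) (a b t l c : R) :
  is_derive t 1 f l -> (forall s, a < s < b -> f s = c) -> a < t < b -> l = 0.
Proof.
move=> hd hc tab.
have N : \forall s \near t, f s = cst c s.
  have := @near_in_itvoo R a b t; rewrite in_itv /= tab => /(_ isT).
  apply: filterS => s; rewrite in_itv /=; exact: hc.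
have := near_eq_is_derive N hd => -[_ <-].
by rewrite derive_val.
Qed.
Definition Ff (n m : nat) (P : params R n m) (X : traj R n m) (i : 'I_n) (s : R) : R :=
  (lr X i s - pLm P i / pLs P i * (cos (th X i s) * ls X i s i0 ord0 + sin (th X i s) * ls X i s i1 ord0))
  / (pLr P i - pLm P i ^+ 2 / pLs P i).
Arguments Ff {n m}.

Lemma Ff_derive (n m : nat) (P : params R n m) (X : traj R n m) (i : 'I_n) (t dlr : R) dls :
  is_derive t 1 (th X i) (om X i t) -> is_derive t 1 (lr X i) dlr ->
  is_derive t 1 (ls X i) dls ->
  is_derive t 1 (Ff P X i)
   ((dlr - pLm P i / pLs P i *
      (om X i t * (- sin (th X i t) * ls X i t i0 ord0 + cos (th X i t) * ls X i t i1 ord0)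
       + (cos (th X i t) * dls i0 ord0 + sin (th X i t) * dls i1 ord0)))
    / (pLr P i - pLm P i ^+ 2 / pLs P i)).
Proof.
move=> hth hlr hls.
have HG := @G_derive _ _ _ _ _ hth hls.
set G := (fun s => _) in HG.
have H := is_deriveZ (pLr P i - pLm P i ^+ 2 / pLs P i)^-1
            (is_deriveB hlr (is_deriveZ (pLm P i / pLs P i) HG)).
have E : Ff P X i = (pLr P i - pLm P i ^+ 2 / pLs P i)^-1 \*:
     (lr X i - (pLm P i / pLs P i) \*: G).
  by apply/funext => s; rewrite /Ff /G /= mulrC.
rewrite E; apply: (is_derive_eq H).
by rewrite -![_ *: _]/(_ * _) mulrC.
Qed.
Lemma flux_cmp (a c th : R) (isv : 'cV[R]_2) (k : 'I_2) :
  (a *: isv + c *: (Defs.rot th *m (@e1 R))) k ord0 = a * isv k ord0 + c * (Defs.rot th *m (@e1 R)) k ord0.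
Proof. by rewrite !mxE. Qed.

Lemma comp_ur (a b c : R) (isv v : 'cV[R]_2) (k : 'I_2) :
  (a *: (-(b *: isv + c *: ((@jmx R) *m isv)) + v)) k ord0
  = a * (-(b * isv k ord0 + c * ((@jmx R) *m isv) k ord0) + v k ord0).
Proof. by rewrite !mxE. Qed.

Lemma comp_ls (b : R) (isv v : 'cV[R]_2) (k : 'I_2) :
  (- (b *: isv) + v) k ord0 = - (b * isv k ord0) + v k ord0.
Proof. by rewrite !mxE. Qed.

Lemma flux_sc (n m : nat) (P : params R n m) (X : traj R n m) (i : 'I_n) (s : R) :
  ls X i s = pLs P i *: isc X i s + (pLm P i * irc X i s) *: (Defs.rot (th X i s) *m @e1 R) ->
  ls X i s i0 ord0 = pLs P i * isc X i s i0 ord0 + pLm P i * irc X i s * cos (th X i s) /\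
  ls X i s i1 ord0 = pLs P i * isc X i s i1 ord0 + pLm P i * irc X i s * sin (th X i s).
Proof. by move=> ->; rewrite !flux_cmp rote1_0 rote1_1. Qed.

Lemma Ff_eq (n m : nat) (P : params R n m) (X : traj R n m) (i : 'I_n) (s : R) :
  pLs P i != 0 -> pLs P i * pLr P i - pLm P i ^+ 2 != 0 ->
  ls X i s = pLs P i *: isc X i s + (pLm P i * irc X i s) *: (Defs.rot (th X i s) *m @e1 R) ->
  lr X i s = pLr P i * irc X i s
               + pLm P i * sc ((@e1 R)^T *m (Defs.rot (th X i s))^T *m isc X i s) ->
  Ff P X i s = irc X i s.
Proof.
move=> hLs hsg hfl hlr.
have [h0 h1] := @flux_sc _ _ P X i s hfl.
rewrite /Ff h0 h1 hlr sc_e1.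
have cs := cos2Dsin2 (th X i s).
have hs : pLr P i - pLm P i ^+ 2 / pLs P i != 0.
  apply: contraNneq hsg => e.
  have -> : pLs P i * pLr P i - pLm P i ^+ 2 = pLs P i * (pLr P i - pLm P i ^+ 2 / pLs P i).
    by field.
  by rewrite e mulr0.
apply: (canLR (mulfK hs)).
set c := cos _ in cs *; set sn := sin _ in cs *.
set L := pLs P i; set M := pLm P i; set I := irc X i s.
transitivity ((pLr P i - M ^+ 2 / L) * I + M / L * M * I * (1 - (c ^+ 2 + sn ^+ 2))).
  by field.
by rewrite cs subrr mulr0 addr0 mulrC.
Qed.
Lemma ndecr_deriv (f df : R -> R) (a b : R) :
  (forall t, a < t < b -> is_derive t 1 f (df t)) ->
  (forall t, a < t < b -> 0 <= df t) ->
  forall x y, a < x -> x <= y -> y < b -> f x <= f y.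
Proof.
move=> hd hle x y ax xy yb.
have := @nincr_deriv (fun s => - f s) (fun s => - df s) a b _ _ x y ax xy yb.
rewrite lerN2; apply.
- move=> s hs; exact: is_deriveN (hd s hs).
- by move=> s hs; rewrite oppr_le0 hle.
Qed.

Lemma sigma_pos (Ls Lr Lm : R) : 0 < Ls -> Ls * Lr - Lm ^+ 2 > 0 -> 0 < Lr - Lm ^+ 2 / Ls.
Proof.
move=> hL hs.
have -> : Lr - Lm ^+ 2 / Ls = (Ls * Lr - Lm ^+ 2) / Ls by field; rewrite gt_eqF.
by rewrite divr_gt0.
Qed.
End H.
Arguments Ff {R n m}. Arguments deriv_zero_near {R}. Arguments sigma_pos {R}. Arguments nincr_deriv {R}. Arguments ndecr_deriv {R}.

Theorem lemma1 (R : realType) (n m : nat) (P : params R n m) (w0 : R)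
    (irs : 'I_n -> R) :
  admissible P -> 0 < w0 -> (forall i, 0 < irs i) ->
  (forall (X : traj R n m) (a b : R),
      is_solution P X a b ->
      (forall t, a < t < b -> in_Omega X irs w0 t) ->
      forall t, a < t < b -> forall i,
        um X i t = um_star P irs w0 i (th X i t) (isc X i t) /\
        ur X i t = ur_star P irs w0 i (th X i t) (isc X i t) (vv X i t)) /\
  (forall (X : traj R n m) (a b : R),
      is_solution P X a b ->
      (forall t, a < t < b -> forall i,
        um X i t = um_star P irs w0 i (th X i t) (isc X i t) /\
        ur X i t = ur_star P irs w0 i (th X i t) (isc X i t) (vv X i t)) ->
      forall t0, a < t0 < b -> in_Omega X irs w0 t0 ->
      forall t, a < t < b -> in_Omega X irs w0 t).
Proof.
move=> [hpos hsg _ _ _] w0pos irspos; split.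
- move=> X a b hsol hom t tab i.
  have [hfl [hlr [hM [hth [hlrd [hlsd _]]]]]] := hsol t tab.
  have [[M0 D0 Rr0 Lr0 Lm0] [Rs0 Ls0 C0 G0]] := hpos i.
  have sg0 := sigma_pos _ _ _ Ls0 (hsg i).
  have [hirc homt] := hom t tab i.
  split.
  + have z := @deriv_zero_near _ _ a b t _ (pM P i * w0) (hM i).
    have {}z : - (pD P i * om X i t) - tau_e P X i t + um X i t = 0.
      apply: z tab => s hs; by case: (hom s hs i) => _ ->.
    move: z; rewrite /um_star sc_e2 /tau_e sc_e2 hirc homt => z.
    apply/eqP; rewrite -subr_eq0; apply/eqP; rewrite -z; ring.
  + have hF : forall s, a < s < b -> Ff P X i s = irs i.
      move=> s hs; have [hfl' [hlr' _]] := hsol s hs.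
      rewrite (@Ff_eq R _ _ P X i s) ?(gt_eqF Ls0) ?(gt_eqF (hsg i)) //.
      by case: (hom s hs i).
    have D := @Ff_derive R _ _ P X i t _ _ (hth i) (hlrd i) (hlsd i).
    have := deriv_zero_near _ _ _ _ _ _ D hF tab.
    rewrite !comp_ls; move/eqP; rewrite mulf_eq0 invr_eq0 (gt_eqF sg0) orbF subr_eq0 => /eqP z.
    have [h0 h1] := @flux_sc R _ _ P X i t (hfl i).
    rewrite h0 h1 hirc homt in z.
    rewrite /ur_star sc_e1 !comp_ur j_0 j_1.
    have -> : ur X i t = (- (pRr P i * irs i) + ur X i t) + pRr P i * irs i by ring.
    by rewrite z; field; rewrite gt_eqF.
- move=> X a b hsol hu t0 t0ab hom0 t tab i.
  have [[M0 D0 Rr0 Lr0 Lm0] [Rs0 Ls0 C0 G0]] := hpos i.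
  have sg0 := sigma_pos _ _ _ Ls0 (hsg i).
  set sg := pLr P i - pLm P i ^+ 2 / pLs P i in sg0.
  pose dF s := ((- (pRr P i * irc X i s) + ur X i s) - pLm P i / pLs P i *
      (om X i s * (- sin (th X i s) * ls X i s ord0 ord0 + cos (th X i s) * ls X i s ord_max ord0)
       + (cos (th X i s) * (- (pRs P i *: isc X i s) + vv X i s) ord0 ord0
          + sin (th X i s) * (- (pRs P i *: isc X i s) + vv X i s) ord_max ord0))) / sg.
  pose lM s := - (pD P i * om X i s) - tau_e P X i s + um X i s.
  have hF : forall s, a < s < b -> is_derive s 1 (Ff P X i) (dF s).
    move=> s hs; have [_ [_ [_ [hth [hlrd [hlsd _]]]]]] := hsol s hs.
    exact: (@Ff_derive R _ _ P X i s _ _ (hth i) (hlrd i) (hlsd i)).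
  have hO : forall s, a < s < b -> is_derive s 1 (om X i) ((pM P i)^-1 * lM s).
    move=> s hs; have [_ [_ [hM _]]] := hsol s hs.
    have E : om X i = (pM P i)^-1 \*: (fun s => pM P i * om X i s).
      by apply/funext => r /=; rewrite -[_ *: _]/(_ * _) mulrA mulVf ?mul1r ?gt_eqF.
    rewrite E; exact: is_deriveZ (hM i).
  have hx : forall s, a < s < b -> is_derive s 1 (om X i - cst w0) ((pM P i)^-1 * lM s - 0).
    move=> s hs; exact: is_deriveB (hO s hs) (is_derive_cst _ _ _).
  have hy : forall s, a < s < b -> is_derive s 1 (Ff P X i - cst (irs i)) (dF s - 0).
    move=> s hs; exact: is_deriveB (hF s hs) (is_derive_cst _ _ _).
  pose V s := pM P i * ((om X i s - w0) * (om X i s - w0)) + sg * ((Ff P X i s - irs i) * (Ff P X i s - irs i)).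
  have hV : forall s, a < s < b -> is_derive s 1 V
     (- (2 * pD P i * (om X i s - w0) ^+ 2) - 2 * pRr P i * (irc X i s - irs i) ^+ 2).
    move=> s hs.
    have H := is_deriveD (is_deriveZ (pM P i) (is_deriveM (hx s hs) (hx s hs)))
                         (is_deriveZ sg (is_deriveM (hy s hs) (hy s hs))).
    apply: (is_derive_eq H).
    change (pM P i * ((om X i s - w0) * ((pM P i)^-1 * lM s - 0) + (om X i s - w0) * ((pM P i)^-1 * lM s - 0))
      + sg * ((Ff P X i s - irs i) * (dF s - 0) + (Ff P X i s - irs i) * (dF s - 0)) = - (2 * pD P i * (om X i s - w0) ^+ 2) -
  2 * pRr P i * (irc X i s - irs i) ^+ 2).
    have [hfl [hlr _]] := hsol s hs.
    have [hum hur] := hu s hs i.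
    have Ffs := @Ff_eq R _ _ P X i s (negbT (gt_eqF Ls0)) (negbT (gt_eqF (hsg i))) (hfl i) (hlr i).
    have [h0 h1] := @flux_sc R _ _ P X i s (hfl i).
    rewrite Ffs /dF /lM /tau_e hum hur /um_star /ur_star sc_e1 sc_e2 !comp_ls !comp_ur j_0 j_1 h0 h1.
    by field; rewrite !gt_eqF.
  have Vnn : forall s, 0 <= V s.
    move=> s; rewrite /V -!expr2.
    by rewrite addr_ge0 // mulr_ge0 // ?sqr_ge0 // ltW.
  have Ffe : forall s, a < s < b -> Ff P X i s = irc X i s.
    move=> s hs; have [hfl [hlr _]] := hsol s hs.
    exact: (@Ff_eq R _ _ P X i s (negbT (gt_eqF Ls0)) (negbT (gt_eqF (hsg i))) (hfl i) (hlr i)).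
  have Vt0 : V t0 = 0.
    have [hi ho] := hom0 i.
    by rewrite /V Ffe // hi ho !subrr !mulr0 addr0.
  have Vle : V t <= 0.
    have [le_t0t | lt_tt0] := leP t0 t.
    + rewrite -Vt0.
      apply: (nincr_deriv V _ a b hV) => //.
      * move=> s hs.
        rewrite -opprD oppr_le0 addr_ge0 // mulr_ge0 // ?sqr_ge0 // mulr_ge0 // ltW //.
      * by case/andP: t0ab.
      * by case/andP: tab.
    + pose K := 2 * pD P i / pM P i + 2 * pRr P i / sg.
      pose W s := expR (K * s) * V s.
      have hW : forall s, a < s < b -> is_derive s 1 W
          (expR (K * s) * (K * V s - (2 * pD P i * (om X i s - w0) ^+ 2)
                             - 2 * pRr P i * (irc X i s - irs i) ^+ 2)).
        move=> s hs.
        have hK : is_derive s 1 (fun r : R => K * r) K.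
          have := is_deriveZ K (is_derive_id s 1).
          move=> H; apply: (is_derive_eq H); rewrite -[_ *: _]/(_ * _); exact: mulr1.
        have hE : is_derive s 1 (expR \o (fun r : R => K * r)) (expR (K * s) * K).
          exact: is_derive1_comp.
        have H := is_deriveM hE (hV s hs).
        apply: (is_derive_eq H).
        rewrite -![_ *: _]/(_ * _) /=; ring.
      have := ndecr_deriv W _ a b hW _ t t0.
      rewrite /W Vt0 mulr0 pmulr_rle0 ?expR_gt0 //; apply => //.
      * move=> s hs; rewrite mulr_ge0 // ?expR_ge0 //.
        rewrite /V Ffe // /K -!expr2.
        set x := om X i s - w0; set y := irc X i s - irs i.
        have -> : (2 * pD P i / pM P i + 2 * pRr P i / sg) *
             (pM P i * x ^+ 2 + sg * y ^+ 2) - 2 * pD P i * x ^+ 2 - 2 * pRr P i * y ^+ 2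
           = 2 * pD P i * sg / pM P i * y ^+ 2 + 2 * pRr P i * pM P i / sg * x ^+ 2.
          by field; rewrite !gt_eqF.
        by rewrite addr_ge0 // mulr_ge0 // ?sqr_ge0 // ltW // divr_gt0 // mulr_gt0 // mulr_gt0.
      * by case/andP: tab.
      * exact: ltW.
      * by case/andP: t0ab.
  have V0 : V t = 0 by apply/eqP; rewrite eq_le Vle Vnn.
  move: V0; rewrite /V Ffe // -!expr2 => /eqP.
  have n1 : 0 <= pM P i * (om X i t - w0) ^+ 2 by rewrite mulr_ge0 ?sqr_ge0 // ltW.
  have n2 : 0 <= sg * (irc X i t - irs i) ^+ 2 by rewrite mulr_ge0 ?sqr_ge0 // ltW.
  rewrite paddr_eq0 // !mulf_eq0 (gt_eqF M0) (gt_eqF sg0) !orbb /= !subr_eq0.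
  by case/andP => /eqP -> /eqP ->.
Qed.
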